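(* Fix $\alpha>1$, a Pufferfish scenario $(\mathcal S,\mathcal Q,\Theta)$ and a slice profile $(\mathcal U,\omega)$. If a mechanism $\mathcal M$ satisfies $(\alpha,\epsilon,\omega)$-Ave-SRPP in $(\mathcal S,\mathcal Q,\Theta)$, then for any $\delta\in(0,1)$ it satisfies $(\epsilon',\delta,\omega)$-Ave-SPP in $(\mathcal S,\mathcal Q,\Theta)$ with $\epsilon'=\epsilon+\frac{\log(1/\delta)}{\alpha-1}$.
   Context: Pufferfish scenario: secrets $\mathcal S$, pairs $\mathcal Q\subseteq\mathcal S\times\mathcal S$, priors $\Theta$, each a joint law of secret $S$ and dataset $X$ with secret marginal $P^S_\theta$; $\mathcal M^\theta_s$ is the law of $\mathcal M(X)\in\mathbb R^d$ given $S=s$ under $\theta$. Slice profile: $\mathcal U\subseteq\mathbb S^{d-1}$, $\omega$ a probability measure on the unit sphere supported on $\mathcal U$; $\Psi^u(a)=\langle a,u\rangle$, $\Psi^u_\#$ pushforward. $\mathtt D_\alpha$ is R\'enyi divergence. $\mathcal M$ is $(\alpha,\epsilon,\omega)$-Ave-SRPP if $\int\mathtt D_\alpha(\Psi^u_\#\mathcal M^\theta_{s_i}\|\Psi^u_\#\mathcal M^\theta_{s_j})\,d\omega(u)\le\epsilon$ for all $\theta\in\Theta$ and $(s_i,s_j)\in\mathcal Q$ with $P^S_\theta(s_i),P^S_\theta(s_j)>0$. Approximate max-divergence: $\mathtt D^\delta_\infty(P\|Q)=\inf\{\varepsilon\ge0:\ P(A)\le e^\varepsilon Q(A)+\delta\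 \text{for all measurable }A\}$. $\mathcal M$ is $(\varepsilon,\delta,\omega)$-Ave-SPP if $\int\mathtt D^\delta_\infty(\Psi^u_\#\mathcal M^\theta_{s_i}\|\Psi^u_\#\mathcal M^\theta_{s_j})\,d\omega(u)\le\varepsilon$ for all such $\theta$ and $(s_i,s_j)$. *)

(* Defs.v *)
From HB Require Import structures.
From mathcomp Require Import all_boot all_order all_algebra.
From mathcomp Require Import all_classical all_reals all_analysis measurable_realfun.
Set Implicit Arguments. Unset Strict Implicit. Unset Printing Implicit Defensive.
Import Order.TTheory GRing.Theory Num.Theory.
Local Open Scope classical_set_scope.
Local Open Scope ring_scope.

(* R^d is modelled as d.-tuple R with its product (Borel) sigma-algebra. *)

Definition inner (R : realType) (d : nat) (a u : d.-tuple R) : R :=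
  \sum_(i < d) tnth a i * tnth u i.

Definition unit_sphere (R : realType) (d : nat) : set (d.-tuple R) :=
  [set u | \sum_(i < d) tnth u i ^+ 2 = 1].

Definition Psi (R : realType) (d : nat) (u : d.-tuple R) : d.-tuple R -> R :=
  fun a => inner a u.

Lemma measurable_Psi (R : realType) (d : nat) (u : d.-tuple R) :
  measurable_fun [set: d.-tuple R] (Psi u).
Proof.
rewrite /Psi /inner.
have := @measurable_sum _ _ R setT 'I_d (index_enum 'I_d)
  (fun i (a : d.-tuple R) => tnth a i * tnth u i).
apply => i; apply: measurable_funM => //; exact: measurable_tnth.
Qed.

HB.instance Definition _ (R : realType) (d : nat) (u : d.-tuple R) :=
  isMeasurableFun.Build _ _ _ _ (Psi u) (measurable_Psi u).

Definition slice_law (R : realType) (d : nat) (P : probability (d.-tuple R) R)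
  (u : d.-tuple R) : probability R R := distribution P (Psi u).

Local Open Scope ereal_scope.

Definition eln (R : realType) (x : \bar R) : \bar R :=
  match x with
  | r%:E => (ln r)%:E
  | +oo => +oo
  | -oo => -oo
  end.

Definition renyi_div (R : realType) (alpha : R) (P Q : probability R R) : \bar R :=
  if `[< P `<< Q >] then
    ((alpha - 1)^-1)%:E * eln (\int[Q]_x ((Radon_Nikodym (charge_of_finite_measure P) Q x) `^ alpha))
  else +oo.

Definition approx_max_div (R : realType) (delta : R) (P Q : probability R R) : \bar R :=
  ereal_inf [set e%:E | e in [set e : R | (0 <= e)%R /\
     forall A : set R, measurable A -> P A <= (expR e)%:E * Q A + delta%:E]].

Definition slice_profile (R : realType) (d : nat) (U : set (d.-tuple R))
  (omega : probability (d.-tuple R) R) : Prop :=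
  U `<=` @unit_sphere R d /\ omega.-negligible (~` U).

(* Pufferfish scenario (S, Q, Theta): secrets of type S, discriminative
   pairs Qs, priors Theta (indexed by a type Th).  For each prior th:
   PS th s = P^S_th(s) is the prior probability of secret s, and
   M th s = M^th_s is the law of the output M(X) in R^d given S = s. *)

Definition ave_SRPP (R : realType) (d : nat) (S Th : Type) (Qs : set (S * S))
  (Theta : set Th) (PS : Th -> S -> R) (M : Th -> S -> probability (d.-tuple R) R)
  (omega : probability (d.-tuple R) R) (alpha eps : R) : Prop :=
  forall th si sj, Theta th -> Qs (si, sj) -> (0 < PS th si)%R -> (0 < PS th sj)%R ->
    \int[omega]_u renyi_div alpha (slice_law (M th si) u) (slice_law (M th sj) u)
      <= eps%:E.

Definition ave_SPP (R : realType) (d : nat) (S Th : Type) (Qs : set (S * S))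
  (Theta : set Th) (PS : Th -> S -> R) (M : Th -> S -> probability (d.-tuple R) R)
  (omega : probability (d.-tuple R) R) (eps delta : R) : Prop :=
  forall th si sj, Theta th -> Qs (si, sj) -> (0 < PS th si)%R -> (0 < PS th sj)%R ->
    \int[omega]_u approx_max_div delta (slice_law (M th si) u) (slice_law (M th sj) u)
      <= eps%:E.

(* Main.v *)
Require Import Defs.
From HB Require Import structures.
From mathcomp Require Import all_boot all_order all_algebra.
From mathcomp Require Import all_classical all_reals all_analysis.
From mathcomp Require Import measurable_realfun ring lra.
Import Order.TTheory GRing.Theory Num.Theory.
Local Open Scope classical_set_scope.
Local Open Scope ring_scope.
Lemma young_pt (R : realType) (a t : R) : 1 < a ->
  Num.max t 0 <= (a - 1) / a + a^-1 * t `^ a.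
Proof.
move=> a1; have a0 : 0 < a by lra.
have a10 : 0 < a - 1 by lra.
have r0 : 0 <= (a - 1) / a by apply: divr_ge0; apply: ltW.
have p0 : 0 <= a^-1 * t `^ a.
  by apply: mulr_ge0; [rewrite invr_ge0; exact: ltW | exact: powR_ge0].
rewrite ge_max; apply/andP; split; last by rewrite addr_ge0.
case: (leP t 0) => t0; first by apply: le_trans t0 _; rewrite addr_ge0.
have := @conjugate_powR R t 1 a (a / (a - 1)) (ltW t0) ler01 a0 _ _.
rewrite mulr1 powR1 => H.
have q0 : 0 < a / (a - 1) by rewrite divr_gt0.
have pq : a^-1 + (a / (a - 1))^-1 = 1.
  by rewrite invf_div; field; lra.
move: (H q0 pq) => {}H.
apply: (le_trans H); by rewrite invf_div mul1r addrC [t `^ a / a]mulrC.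

Qed.

Lemma tail_pt (R : realType) (a e t : R) : 1 < a ->
  Num.max t 0 <= expR e + expR (- ((a - 1) * e)) * t `^ a.
Proof.
move=> a1; have a0 : 0 < a by lra.
have a10 : 0 < a - 1 by lra.
have p0 : 0 <= expR (- ((a - 1) * e)) * t `^ a by rewrite mulr_ge0 ?expR_ge0 ?powR_ge0.
rewrite ge_max; apply/andP; split; last by rewrite addr_ge0 ?expR_ge0.
case: (leP t (expR e)) => te; first by rewrite ler_wpDr.
have t0 : 0 < t by apply: lt_trans te; exact: expR_gt0.
apply: ler_wpDl; first exact: expR_ge0.
rewrite /powR gt_eqF // -expRD -[X in X <= _]lnK ?posrE // ler_expR.
have : e < ln t by rewrite -ltr_expR lnK ?posrE.
move=> et.
have : 0 <= (a - 1) * (ln t - e) by rewrite mulr_ge0 ?ltW // subr_gt0.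
by rewrite mulrBr; lra.
Qed.

Section E.
Local Open Scope ereal_scope.
Import HBNNSimple.
Lemma int_mono d (T : measurableType d) (R : realType) (mu : {measure set T -> \bar R})
  (f g : T -> \bar R) : (forall x, 0 <= f x) -> (forall x, f x <= g x) ->
  \int[mu]_x f x <= \int[mu]_x g x.
Proof.
move=> f0 fg.
rewrite !ge0_integralTE //; last by move=> x; exact: le_trans (f0 x) (fg x).
apply: ereal_sup_le => _ [h hf <-]; exists h => // x; exact: le_trans (hf x) (fg x).
Qed.

Lemma int_shift d (T : measurableType d) (R : realType) (mu : {measure set T -> \bar R})
  (g : T -> \bar R) (c : R) : mu setT = 1 -> (forall x, 0 <= g x) -> (0 <= c)%R ->
  \int[mu]_x (g x + c%:E) <= \int[mu]_x g x + c%:E.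
Proof.
move=> mu1 g0 c0.
rewrite ge0_integralTE; last by move=> x; rewrite adde_ge0.
apply: ge_ereal_sup => _ [h hgc <-].
have -> : sintegral mu h = \int[mu]_x (h x)%:E.
  by rewrite integral_nnsfun// patch_setT.
pose k : T -> R := fun x => Num.max (h x - c)%R 0%R.
have mk : measurable_fun setT (fun x => (k x)%:E).
  apply/measurable_EFinP; apply: measurable_maxr => //.
  by apply: measurable_funB.
apply: (@le_trans _ _ (\int[mu]_x ((k x)%:E + c%:E))).
  apply: ge0_le_integral => //.
  - by move=> x _; rewrite lee_fin.
  - by apply/measurable_EFinP.
  - by apply: emeasurable_funD.
  move=> x _; rewrite -EFinD lee_fin -lerBlDr.
  by rewrite le_max lexx.
rewrite ge0_integralD //; last by move=> x _; rewrite lee_fin le_max lexx orbT.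
rewrite integral_cst //.
rewrite mu1 mule1 leeD2r //.
apply: int_mono; first by move=> x; rewrite lee_fin le_max lexx orbT.
move=> x; rewrite /k; case: (leP (h x - c)%R 0%R) => hc.
  exact: g0.
by rewrite EFinB leeBlDr //; exact: hgc.
Qed.

Lemma rn_bound (R : realType) (a : R) (P Q : probability R R) (A : set R) (b0 b1 : R) :
  (1 < a)%R -> P `<< Q -> measurable A -> (0 <= b0)%R -> (0 <= b1)%R ->
  (forall t : R, Num.max t 0 <= b0 + b1 * t `^ a)%R ->
  P A <= b0%:E * Q A + b1%:E *
    \int[Q]_x ((Radon_Nikodym (charge_of_finite_measure P) Q x) `^ a).
Proof.
move=> a1 PQ mA b00 b10 H.
set f := Radon_Nikodym (charge_of_finite_measure P) Q.
have PQ' : charge_of_finite_measure P `<< Q by [].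
have fin x : f x \is a fin_num by exact: Radon_Nikodym_fin_num.
have mf : measurable_fun setT f.
  exact: measurable_int (Radon_Nikodym_integrable PQ').
have mfa : measurable_fun setT (fun x => f x `^ a).
  exact: (measurableT_comp (measurable_poweR _)).
have -> : P A = \int[Q]_(x in A) f x.
  by have := Radon_Nikodym_integral PQ' mA.
apply: (@le_trans _ _ (\int[Q]_(x in A) f^\+ x)).
  rewrite integralE.
  apply: (@le_trans _ _ (\int[Q]_(x in A) f^\+ x - 0)); last by rewrite sube0.
  have h : 0 <= \int[Q]_(x in A) f^\- x.
    by apply: integral_ge0 => x _; exact: funeneg_ge0.
  exact: (leeB (lexx _) h).
apply: (@le_trans _ _ (\int[Q]_(x in A) (b0%:E + b1%:E * f x `^ a))).
  apply: ge0_le_integral => //.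
  - by apply: measurable_funTS; exact: measurable_funepos.
  - apply: measurable_funTS; apply: emeasurable_funD => //.
    exact: emeasurable_funM.
  move=> x _; rewrite funeposE -(fineK (fin x)) poweR_EFin -EFinM -EFinD.
  by rewrite -EFin_max lee_fin H.
rewrite ge0_integralD //; last 2 first.
- by move=> x _; rewrite mule_ge0 ?lee_fin ?poweR_ge0.
- by apply: measurable_funTS; exact: emeasurable_funM.
rewrite integral_cst // ge0_integralZl_EFin //; last 2 first.
- by move=> x _; exact: poweR_ge0.
- exact: measurable_funTS.
rewrite leeD2l // lee_wpmul2l // ?lee_fin //.
apply: ge0_subset_integral => //.
by move=> x _; exact: poweR_ge0.
Qed.
Lemma approx_ge0 (R : realType) (delta : R) (P Q : probability R R) :
  0 <= approx_max_div delta P Q.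
Proof.
apply: le_ereal_inf_tmp => _ [e [e0 _] <-]; by rewrite lee_fin.
Qed.

Lemma slice_pt (R : realType) (a delta : R) (P Q : probability R R) :
  (1 < a)%R -> (0 < delta < 1)%R ->
  0 <= renyi_div a P Q /\
  approx_max_div delta P Q <= renyi_div a P Q + (ln (1 / delta) / (a - 1))%:E.
Proof.
move=> a1 /andP[d0 d1].
have a0 : (0 < a)%R by lra.
have a10 : (0 < a - 1)%R by lra.
rewrite /renyi_div; case: asboolP => PQ; last first.
  by split; [exact: le0y | rewrite addye // leey].
set I := \int[Q]_x _.
have I0 : 0 <= I by apply: integral_ge0 => x _; exact: poweR_ge0.
have Y := @rn_bound R a P Q setT ((a - 1) / a) (a^-1) a1 PQ measurableT.
have {Y} Y : P setT <= ((a - 1) / a)%:E * Q setT + (a^-1)%:E * I.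
  apply: Y; [by rewrite divr_ge0 ?ltW | by rewrite invr_ge0 ltW |].
  by move=> t; exact: young_pt.
have T : forall e A, measurable A ->
    P A <= (expR e)%:E * Q A + (expR (- ((a - 1) * e)))%:E * I.
  move=> e A mA; apply: rn_bound => //; try exact: expR_ge0.
  by move=> t; exact: tail_pt.
clearbody I.
move: I0 Y T; case: I => [r | | ] I0 Y T; last first.
- by [].
- rewrite /= gt0_muley ?lte_fin ?invr_gt0 //.
  by split; [exact: le0y | rewrite addye // leey].
rewrite !probability_setT mule1 -EFinM -EFinD lee_fin in Y.
have r1 : (1 <= r)%R.
  have aV : (a * a^-1 = 1)%R by rewrite mulfV // gt_eqF.
  have E : ((a - 1) / a + a^-1 * r = 1 + (r - 1) * a^-1)%R.
    by field; lra.
  move: Y; rewrite E => Y.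
  have : (0 <= (r - 1) * a^-1)%R by lra.
  by rewrite pmulr_lge0 ?invr_gt0 // subr_ge0.
have lnr : (0 <= ln r)%R by exact: ln_ge0.
rewrite /= -EFinM; split; first by rewrite lee_fin mulr_ge0 // invr_ge0 ltW.
set e := ((a - 1)^-1 * ln r + ln (1 / delta) / (a - 1))%R.
have lnd : (0 < ln (1 / delta))%R.
  by apply: ln_gt0; rewrite div1r invf_gt1.
have e0 : (0 <= e)%R.
  apply: addr_ge0; first by apply: mulr_ge0 => //; rewrite invr_ge0 ltW.
  by apply: divr_ge0; apply: ltW.
rewrite -EFinD -/e.
apply: ereal_inf_lbound; exists e => //; split => // A mA.
apply: (le_trans (T e A mA)).
rewrite leeD2l // -EFinM lee_fin.
have -> : (expR (- ((a - 1) * e)) * r = delta)%R.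
  rewrite -[X in (_ * X)%R]lnK ?posrE; last by lra.
  rewrite -expRD.
  have -> : (- ((a - 1) * e) + ln r = ln delta)%R.
    rewrite /e div1r lnV ?posrE //; field; lra.
  by rewrite lnK // posrE.
by [].
Qed.

End E.

Theorem theorem8 (R : realType) (d : nat) (S Th : Type) (Qs : set (S * S))
  (Theta : set Th) (PS : Th -> S -> R)
  (M : Th -> S -> probability (d.-tuple R) R)
  (U : set (d.-tuple R)) (omega : probability (d.-tuple R) R)
  (alpha eps : R) :
  1 < alpha ->
  slice_profile U omega ->
  ave_SRPP Qs Theta PS M omega alpha eps ->
  forall delta : R, 0 < delta < 1 ->
    ave_SPP Qs Theta PS M omega (eps + ln (1 / delta) / (alpha - 1)) delta.
Proof.
move=> a1 _ H delta dd th si sj Tth Qij p1 p2.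
have HG := H th si sj Tth Qij p1 p2.
have c0 : 0 <= ln (1 / delta) / (alpha - 1).
  case/andP: dd => d0 d1.
  apply: divr_ge0; last by lra.
  by apply: ln_ge0; rewrite div1r invf_ge1 //; lra.
set c := ln (1 / delta) / (alpha - 1).
have pt := fun u => @slice_pt R alpha delta (slice_law (M th si) u) (slice_law (M th sj) u) a1 dd.
set G := fun u => renyi_div alpha (slice_law (M th si) u) (slice_law (M th sj) u).
apply: (@le_trans _ _ (\int[omega]_u (G u + c%:E))%E).
  apply: int_mono => u; first exact: approx_ge0.
  exact: (pt u).2.
apply: (@le_trans _ _ (\int[omega]_u G u + c%:E)%E).
  apply: int_shift => //; first exact: probability_setT.
  by move=> u; exact: (pt u).1.
by rewrite EFinD leeD2r.
Qed.
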